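(* Let $X$ be a compact, Hausdorff, second-countable topological space, and let $\mathcal{Y}$ be a non-empty weak-$*$ compact subset of $\mathcal{M}(X)$. For a measure $\mu_0\in\mathcal{M}(X)$ the following are equivalent: (i) for every $f\in C^0(X)$ with $\int_X f\,d\mu_0<0$ there exists $\mu\in\mathcal{Y}$ with $\int_X f\,d\mu\le 0$; (ii) for every $f\in C^0(X)$ with $\int_X f\,d\mu_0=0$ there exists $\mu\in\mathcal{Y}$ with $\int_X f\,d\mu\le0$; (iii) $\mu_0$ belongs to the weak-$*$ closure of the convex hull of the positive cone over $\mathcal{Y}$; (iv) there exists a sequence $\{\mu_k\}$ in $\mathcal{Y}$ such that \[ \lim_{k\to\infty}\frac1k\sum_{i=1}^k\frac{1}{\mu_i(X)}\int_X f\,d\mu_i=\frac{1}{\mu_0(X)}\int_X f\,d\mu_0\quad\text{for all } f\in C^0(X). \]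
   Context: $C^0(X)$ is the space of continuous real functions on $X$ with the sup norm. $\mathcal{M}(X)$ is the set of (positive) Radon measures on $X$, identified via the Riesz representation theorem with positive bounded linear functionals on $C^0(X)$; the weak-$*$ topology on $\mathcal{M}(X)$ is the coarsest topology making $\mu\mapsto\int_X f\,d\mu$ continuous for every $f\in C^0(X)$. The positive cone over $\mathcal{Y}$ is $\{\lambda\mu:\lambda>0,\mu\in\mathcal{Y}\}$, and its convex hull is the set of finite convex combinations of its elements. *)

(* Defs.v *)
From HB Require Import structures.
From mathcomp Require Import all_boot all_order all_algebra.
From mathcomp Require Import all_classical all_reals all_analysis.
Set Implicit Arguments. Unset Strict Implicit. Unset Printing Implicit Defensive.
Import Order.TTheory GRing.Theory Num.Theory numFieldNormedType.Exports.
Local Open Scope classical_set_scope.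
Local Open Scope ring_scope.

Definition C0 (R : realType) (X : topologicalType) :=
  {f : X -> R | continuous f}.

(* A (positive Radon) measure on X, identified via Riesz with a positive
   linear functional on C^0(X); [L f] plays the role of \int_X f dmu.
   Values of L on non-continuous functions are irrelevant. *)
Definition is_measure (R : realType) (X : topologicalType)
    (L : (X -> R) -> R) : Prop :=
  [/\ forall f g : X -> R, continuous f -> continuous g ->
        L (fun x => f x + g x) = L f + L g,
      forall (a : R) (f : X -> R), continuous f ->
        L (fun x => a * f x) = a * L f &
      forall f : X -> R, continuous f -> (forall x, 0 <= f x) -> 0 <= L f].

Definition mass (R : realType) (X : topologicalType) (L : (X -> R) -> R) : R :=
  L (fun _ => 1).

Definition evalC (R : realType) (X : topologicalType) (L : (X -> R) -> R)
  : {ptws C0 R X -> R} := fun f => L (proj1_sig f).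

Definition wstar (R : realType) (X : topologicalType) :=
  initial_topology (@evalC R X).

Definition pos_cone (R : realType) (X : topologicalType)
    (Y : set ((X -> R) -> R)) : set ((X -> R) -> R) :=
  [set L | exists lam : R, exists2 mu, Y mu &
     0 < lam /\ L = (fun f => lam * mu f)].

Definition conv_hull (R : realType) (X : topologicalType)
    (S : set ((X -> R) -> R)) : set ((X -> R) -> R) :=
  [set L | exists n : nat, exists w : 'I_n -> R, exists m : 'I_n -> (X -> R) -> R,
     [/\ forall i, 0 <= w i, \sum_(i < n) w i = 1, forall i, S (m i) &
         L = (fun f => \sum_(i < n) w i * m i f)]].

(* Main.v *)
Require Import Defs.
From HB Require Import structures.
From mathcomp Require Import all_boot all_order all_algebra.
From mathcomp Require Import all_classical all_reals all_analysis.
From mathcomp Require Import ring lra.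
Import Order.TTheory GRing.Theory Num.Theory numFieldNormedType.Exports.
Local Open Scope classical_set_scope.
Local Open Scope ring_scope.
Set Implicit Arguments. Unset Strict Implicit. Unset Printing Implicit Defensive.
Section Meas.
Context {R : realType} {X : topologicalType}.
Implicit Types (L : (X -> R) -> R) (f g : X -> R).

Lemma mD L f g : is_measure L -> continuous f -> continuous g ->
  L (fun x => f x + g x) = L f + L g.
Proof. by case=> h _ _ cf cg; exact: h. Qed.

Lemma mZ L a f : is_measure L -> continuous f -> L (fun x => a * f x) = a * L f.
Proof. by case=> _ h _ cf; exact: h. Qed.

Lemma mge0 L f : is_measure L -> continuous f -> (forall x, 0 <= f x) -> 0 <= L f.
Proof. by case=> _ _ h; exact: h. Qed.

Lemma cst_cont (c : R) : continuous (fun _ : X => c).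
Proof. by move=> x; exact: cvg_cst. Qed.

Lemma cont_add f g : continuous f -> continuous g -> continuous (fun x => f x + g x).
Proof. by move=> cf cg x; apply: cvgD; [exact: cf|exact: cg]. Qed.

Lemma cont_scale a f : continuous f -> continuous (fun x => a * f x).
Proof. by move=> cf x; apply: cvgM; [exact: cvg_cst|exact: cf]. Qed.

Lemma cont_opp f : continuous f -> continuous (fun x => - f x).
Proof. by move=> cf x; apply: cvgN; exact: cf. Qed.

Lemma mN L f : is_measure L -> continuous f -> L (fun x => - f x) = - L f.
Proof.
move=> mL cf; have := mZ (-1) mL cf.
have -> : (fun x => -1 * f x) = (fun x => - f x) by apply: funext => x; rewrite mulN1r.
by rewrite mulN1r.
Qed.

Lemma mB L f g : is_measure L -> continuous f -> continuous g ->
  L (fun x => f x - g x) = L f - L g.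
Proof. by move=> mL cf cg; rewrite mD ?mN //; exact: cont_opp. Qed.

Lemma mcst L c : is_measure L -> L (fun _ => c) = c * mass L.
Proof.
move=> mL; rewrite /mass -mZ //; last exact: cst_cont.
by congr L; apply: funext => x; rewrite mulr1.
Qed.

Lemma mle L f g : is_measure L -> continuous f -> continuous g ->
  (forall x, f x <= g x) -> L f <= L g.
Proof.
move=> mL cf cg fg; rewrite -subr_ge0 -mB //; apply: mge0 => //.
  by apply: cont_add => //; exact: cont_opp.
by move=> x; rewrite subr_ge0.
Qed.

Lemma mabs L f g e : is_measure L -> continuous f -> continuous g ->
  (forall x, `|f x - g x| <= e) -> `|L f - L g| <= e * mass L.
Proof.
move=> mL cf cg h; rewrite -mB // -mcst //.
have cfg : continuous (fun x => f x - g x) by apply: cont_add => //; exact: cont_opp.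
rewrite ler_norml; apply/andP; split.
  rewrite -mN //; last exact: cst_cont.
  apply: mle => //; first exact/cont_opp/cst_cont.
  by move=> x; have := h x; rewrite ler_norml => /andP[].
apply: mle => //; first exact: cst_cont.
by move=> x; have := h x; rewrite ler_norml => /andP[].
Qed.

Lemma cont_sum (I : Type) (s : seq I) (F : I -> X -> R) :
  (forall i, continuous (F i)) -> continuous (fun x => \sum_(i <- s) F i x).
Proof.
move=> cF; elim: s => [|i s IH].
  by under eq_fun do rewrite big_nil; exact: cst_cont.
by under eq_fun do rewrite big_cons; exact: cont_add.
Qed.

Lemma msum L (I : Type) (s : seq I) (F : I -> X -> R) : is_measure L ->
  (forall i, continuous (F i)) -> L (fun x => \sum_(i <- s) F i x) = \sum_(i <- s) L (F i).
Proof.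
move=> mL cF; elim: s => [|i s IH].
  rewrite big_nil; under eq_fun do rewrite big_nil.
  by rewrite mcst // mul0r.
rewrite big_cons -IH -mD //; last exact: cont_sum.
by congr L; apply: funext => x; rewrite big_cons.
Qed.

End Meas.

Lemma init_cvgP (S : choiceType) (T : topologicalType) (f : S -> T)
  (F : set_system S) (x : S) : Filter F ->
  (F --> (x : initial_topology f)) <-> (f @ F --> f x).
Proof.
move=> FF; split.
  by move=> Fx A /initial_continuous h; apply: Fx; exact: h.
move=> fF A /= [_ [[B Bop <-] Bfs sBfA]].
have : nbhs (f x) B by apply: open_nbhs_nbhs.
by move/fF; rewrite nbhs_simpl => /= FB; apply: filterS FB.
Qed.

Lemma ptws_cvgP (I : Type) (T : topologicalType) (F : set_system {ptws I -> T})
  (t : {ptws I -> T}) : Filter F ->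
  (F --> t) <-> (forall i, (fun h => h i) @ F --> t i).
Proof.
move=> FF.
have := @cvg_sup (I -> T) I (fun i => Topological.class
    (initial_topology (fun f : (I -> T) => f i))) F t FF.
move=> ->; split => h i.
  by have /init_cvgP := h i; apply.
by apply/init_cvgP; exact: h.
Qed.
Section Wstar.
Context {R : realType} {X : topologicalType}.

Lemma wstar_cvgP (F : set_system (wstar R X)) (L : wstar R X) : Filter F ->
  (F --> L) <-> (forall g, continuous g -> (fun M : (X -> R) -> R => M g) @ F --> L g).
Proof.
move=> FF; rewrite /wstar init_cvgP ptws_cvgP; split.
  by move=> h g cg; exact: (h (exist _ g cg)).
by move=> h [g cg]; exact: h.
Qed.

Lemma eval_cont (g : X -> R) : continuous g ->
  continuous (fun M : wstar R X => M g).
Proof.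
move=> cg L; have : (nbhs L) --> L by [].
by move/wstar_cvgP => /(_ g cg).
Qed.
End Wstar.

Section Easy.
Context {R : realType} {X : topologicalType}.

Lemma dir21 (Y : set (wstar R X))
  (Ymeas : forall mu, Y mu -> is_measure mu)
  (Ypos : forall mu, Y mu -> 0 < mass mu)
  (mu0 : (X -> R) -> R) (mu0meas : is_measure mu0) (mu0pos : 0 < mass mu0) :
  (forall f : X -> R, continuous f -> mu0 f = 0 ->
       exists2 mu, Y mu & mu f <= 0) ->
  (forall f : X -> R, continuous f -> mu0 f < 0 ->
       exists2 mu, Y mu & mu f <= 0).
Proof.
move=> h f cf f0; set c := mu0 f / mass mu0.
have cg : continuous (fun x => f x - c) by apply: cont_add => //; exact/cont_opp/cst_cont.
have c0 : c < 0 by rewrite /c pmulr_llt0 // invr_gt0.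
have [mu Ymu mug] : exists2 mu, Y mu & mu (fun x => f x - c) <= 0.
  apply: h => //; rewrite mB //; last exact: cst_cont.
  by rewrite mcst // /c mulfVK ?subrr // gt_eqF.
have mmu := Ymeas _ Ymu.
exists mu => //; move: mug; rewrite mB ?mcst //; last exact: cst_cont.
rewrite subr_le0 => /le_trans; apply; apply/ltW.
by rewrite pmulr_llt0 // ?Ypos //; apply: Ymeas.
Qed.

Lemma dir32 (Y : set (wstar R X))
  (Ymeas : forall mu, Y mu -> is_measure mu)
  (Ypos : forall mu, Y mu -> 0 < mass mu)
  (Ycpt : compact Y)
  (mu0 : (X -> R) -> R) (mu0meas : is_measure mu0) (mu0pos : 0 < mass mu0) :
  (@closure (wstar R X) (conv_hull (pos_cone Y)) mu0) ->
  (forall f : X -> R, continuous f -> mu0 f = 0 ->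
       exists2 mu, Y mu & mu f <= 0).
Proof.
move=> cl f cf f0.
have [//|nex] := pselect (exists2 mu, Y mu & mu f <= 0).
have Ypf : forall mu, Y mu -> 0 < mu f.
  by move=> mu Ymu; rewrite ltNge; apply/negP => muf; apply: nex; exists mu.
pose h (n : nat) := fun x => f x - (n.+1%:R)^-1.
have ch n : continuous (h n) by apply: cont_add => //; exact/cont_opp/cst_cont.
pose U (n : nat) := [set M : wstar R X | 0 < M (h n)].
have : finite_subset_cover [set: nat] U Y.
  move: Ycpt; rewrite compact_cover; apply.
    move=> n _; rewrite /U.
    apply: (@open_comp _ _ (fun M : wstar R X => M (h n)) [set x : R | 0 < x]).
      by move=> M _; exact: eval_cont.
    exact: open_gt.
  move=> mu Ymu; have mmu := Ymeas _ Ymu.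
  exists (Num.Def.trunc (mass mu / mu f)) => //.
  rewrite /U /= /h mB //; last exact: cst_cont.
  rewrite mcst // subr_gt0 mulrC -ltr_pdivlMr ?invr_gt0 ?ltr0n // invrK.
  rewrite mulrC -ltr_pdivrMr ?Ypf //; exact: truncnS_gt.
case=> D' _ cov.
pose N := \max_(n <- finmap.enum_fset D') n.
set c := (N.+1%:R : R)^-1.
have hc : continuous (fun x => f x - c) by apply: cont_add => //; exact/cont_opp/cst_cont.
have Ypc : forall mu, Y mu -> 0 < mu (fun x => f x - c).
  move=> mu Ymu; have [n /= nD] := cov mu Ymu; have mmu := Ymeas _ Ymu.
  rewrite /U /= /h mB //; last exact: cst_cont.
  rewrite mB // ?mcst //; last exact: cst_cont.
  move=> lt; apply: lt_le_trans lt _; rewrite lerD2l lerN2.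
  apply: ler_wpM2r; first exact/ltW/Ypos.
  rewrite lef_pV2 ?posrE // ler_nat ltnS.
  exact: (@leq_bigmax_seq nat _ xpredT (fun n => n) n nD).
pose C := [set M : wstar R X | 0 <= M (fun x => f x - c)].
have clC : closed C.
  apply: (@closed_comp _ _ (fun M : wstar R X => M (fun x => f x - c)) [set x : R | 0 <= x]).
    by move=> M _; exact: eval_cont.
  exact: closed_ge.
have hullC : conv_hull (pos_cone Y) `<=` C.
  move=> M [n [w [m [w0 w1 cone ->]]]]; rewrite /C /=.
  apply: sumr_ge0 => i _; apply: mulr_ge0 => //.
  have [lam [mu Ymu [lam0 ->]]] := cone i.
  by apply: mulr_ge0; [exact: ltW|exact/ltW/Ypc].
have : C mu0.
  have e := (closure_id C).1 clC.
  by rewrite e; exact: (@closureS (wstar R X) _ _ hullC) cl.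
rewrite /C /= mB // ?mcst // ?f0; last exact: cst_cont.
rewrite sub0r oppr_ge0 pmulr_lle0 // leNgt => /negP[]; by rewrite /c invr_gt0 ltr0n.
Qed.
End Easy.

Section Dir43.
Context {R : realType} {X : topologicalType}.

Lemma dir43 (Y : set (wstar R X))
  (Ymeas : forall mu, Y mu -> is_measure mu)
  (Ypos : forall mu, Y mu -> 0 < mass mu)
  (mu0 : (X -> R) -> R) (mu0meas : is_measure mu0) (mu0pos : 0 < mass mu0) :
  (exists2 u : nat -> (X -> R) -> R, (forall k, Y (u k)) &
       forall f : X -> R, continuous f ->
         (fun k : nat => (k%:R)^-1 * \sum_(i < k) (u i f / mass (u i)))
           @ \oo --> mu0 f / mass mu0) ->
  (@closure (wstar R X) (conv_hull (pos_cone Y)) mu0).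
Proof.
case=> u Yu cvgu.
pose s (k : nat) : (X -> R) -> R := fun g =>
  \sum_(i < k) k%:R^-1 * ((mass mu0 / mass (u i)) * u i g).
have sE k g : s k g = mass mu0 * (k%:R^-1 * \sum_(i < k) (u i g / mass (u i))).
  rewrite /s !mulr_sumr; apply: eq_bigr => i _.
  rewrite /=; ring.
have s_cvg : (s @ \oo : set_system (wstar R X)) --> (mu0 : wstar R X).
  apply/wstar_cvgP => g cg.
  have e : (fun k => s k g) =
      (fun k => mass mu0 * (k%:R^-1 * \sum_(i < k) (u i g / mass (u i)))).
    by apply: funext => k /=; rewrite sE.
  have h : (fun k => s k g) @ \oo --> mu0 g.
    rewrite e; have -> : mu0 g = mass mu0 * (mu0 g / mass mu0).
      by rewrite mulrCA mulfV ?mulr1 // gt_eqF.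
    by apply: cvgM; [exact: cvg_cst|exact: cvgu].
  exact: h.
move=> B nB; have := s_cvg B nB; case=> N _ HN.
exists (s N.+1); split; last by apply: HN => /=.
exists N.+1, (fun _ => N.+1%:R^-1),
  (fun i g => (mass mu0 / mass (u i)) * u i g); split.
- by move=> i; rewrite invr_ge0.
- rewrite sumr_const card_ord; set k := N.+1%:R.
  by rewrite -mulr_natr -/k mulVf // /k pnatr_eq0.
- move=> i; exists (mass mu0 / mass (u i)), (u i) => //; split => //.
  by rewrite divr_gt0 // Ypos.
- by [].
Qed.
End Dir43.

Section Arith.
Context {R : realType}.

Lemma geo_le (r : R) m n : 0 <= r -> 2 * r <= 1 ->
  \sum_(m <= j < n) r ^+ j <= 2 * r ^+ m.
Proof.
move=> r0 r1.
have H d : \sum_(m <= j < m + d) r ^+ j + 2 * r ^+ (m + d) <= 2 * r ^+ m.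
  elim: d => [|d IH]; first by rewrite addn0 big_geq // add0r.
  rewrite addnS big_nat_recr ?leq_addr //= exprS.
  apply: le_trans IH; rewrite -addrA lerD2l.
  set t := r ^+ (m + d).
  have t0 : 0 <= t by exact: exprn_ge0.
  have := ler_wpM2r t0 r1; rewrite mul1r -mulrA => h.
  by rewrite [in leRHS]mulr_natl mulr2n lerD2l.
have [nm|mn] := leqP n m.
  rewrite big_geq //; apply: mulr_ge0 => //; exact: exprn_ge0.
have := H (n - m)%N; rewrite subnKC; last exact: ltnW.
move=> h; apply: le_trans h; rewrite lerDl; apply: mulr_ge0 => //; exact: exprn_ge0.
Qed.

Lemma half_ge0 : 0 <= (2^-1 : R). Proof. by rewrite invr_ge0. Qed.
Lemma half_le1 : (2^-1 : R) <= 1. Proof. by rewrite invf_le1 // ler1n. Qed.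

Lemma nat_pow_half (k : nat) : k%:R * (2^-1 : R) ^+ k <= 1.
Proof.
rewrite exprVn -ler_pdivlMr ?invr_gt0 ?exprn_gt0 // invrK mul1r -natrX ler_nat.
exact/ltnW/ltn_expl.
Qed.

Lemma sq_norm_le (x e : R) : 0 <= e -> x ^+ 2 <= e ^+ 2 -> `|x| <= e.
Proof. move=> e0 h; rewrite ler_norml; apply/andP; split; nra. Qed.

Lemma sum_term_le (F : nat -> R) J j : (j < J)%N -> (forall i, 0 <= F i) ->
  F j <= \sum_(0 <= i < J) F i.
Proof.
move=> jJ F0; rewrite (big_cat_nat (n := j)) //= ?(ltnW jJ) //.
rewrite (big_ltn jJ) addrCA lerDl addr_ge0 //; apply: sumr_ge0 => i _; exact: F0.
Qed.
End Arith.

Section Rec.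
Context {R : realType} {X : topologicalType}.
Variable Y : set ((X -> R) -> R).
Hypothesis Ymeas : forall mu, Y mu -> is_measure mu.
Hypothesis Ypos : forall mu, Y mu -> 0 < mass mu.
Hypothesis Yne : Y !=set0.
Variable nu0 : (X -> R) -> R.
Hypothesis nu0meas : is_measure nu0.
Hypothesis nu0m : mass nu0 = 1.
Variable theta : nat -> X -> R.
Hypothesis ctheta : forall j, continuous (theta j).
Hypothesis theta_bd : forall j x, 0 <= theta j x <= (2^-1)^+j.
Hypothesis hyp : forall f, continuous f ->
  exists2 mu, Y mu & mu f / mass mu <= nu0 f + 1.

Local Notation q := (2^-1 : R).

Let pick_ex f : exists mu, Y mu /\ (continuous f -> mu f / mass mu <= nu0 f + 1).
Proof.
have [cf|ncf] := pselect (continuous f).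
  by have [mu Ymu h] := hyp cf; exists mu; split.
by case: Yne => mu Ymu; exists mu; split => // /ncf.
Qed.

Let pick f := proj1_sig (cid (pick_ex f)).
Let pickY f : Y (pick f).
Proof. by rewrite /pick; case: cid => /= mu []. Qed.
Let pickP f : continuous f -> pick f f / mass (pick f) <= nu0 f + 1.
Proof. by rewrite /pick; case: cid => /= mu []. Qed.

Let d (mu : (X -> R) -> R) j := mu (theta j) / mass mu - nu0 (theta j).
Let Dsum (s : seq ((X -> R) -> R)) j := \sum_(mu <- s) d mu j.
Let Fs s := fun x => \sum_(0 <= j < size s) Dsum s j * theta j x.
Let build := fix build n :=
  if n is n'.+1 then rcons (build n') (pick (Fs (build n'))) else [::].
Definition useq k := pick (Fs (build k)).
Local Notation u := useq.

Let buildE k : build k = map u (iota 0 k).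
Proof.
elim: k => [//|k IH].
have -> : iota 0 k.+1 = iota 0 (k + 1) by rewrite addn1.
by rewrite iotaD map_cat cats1 /= -IH.
Qed.

Let E k j := \sum_(0 <= i < k) d (u i) j.

Let DsumE k j : Dsum (build k) j = E k j.
Proof. by rewrite buildE /Dsum big_map /E /index_iota subn0. Qed.

Let sizeb k : size (build k) = k.
Proof. by rewrite buildE size_map size_iota. Qed.

Lemma useqY k : Y (u k). Proof. exact: pickY. Qed.

Let frac_bd mu j : is_measure mu -> 0 < mass mu ->
  0 <= mu (theta j) / mass mu <= q ^+ j.
Proof.
move=> mm m0; apply/andP; split.
  apply: divr_ge0; last exact: ltW.
  by apply: mge0 => // x; have /andP[] := theta_bd j x.
rewrite ler_pdivrMr // -mcst //; apply: mle => //; first exact: cst_cont.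
by move=> x; have /andP[] := theta_bd j x.
Qed.

Let d_bd k j : `|d (u k) j| <= q ^+ j.
Proof.
have Y1 := useqY k.
have /andP[a1 a2] := frac_bd j (Ymeas Y1) (Ypos Y1).
have /andP[b1 b2] : 0 <= nu0 (theta j) <= q ^+ j.
  by have := frac_bd j nu0meas; rewrite nu0m divr1; apply.
rewrite /d ler_norml; apply/andP; split; lra.
Qed.

Let E_bd k j : `|E k j| <= k%:R * q ^+ j.
Proof.
rewrite /E; apply: le_trans; first exact: ler_norm_sum.
apply: le_trans; first by apply: ler_sum => i _; exact: d_bd.
by rewrite sumr_const_nat subn0 mulr_natl.
Qed.

Let step k : \sum_(0 <= j < k) E k j * d (u k) j <= 1.
Proof.
set b := build k.
have cF : continuous (Fs b).
  by apply: (cont_sum (F := fun j x => Dsum b j * theta j x)) => j;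
     apply: cont_scale.
have := pickP cF; rewrite -/(u k) /Fs.
have mu := Ymeas (useqY k).
rewrite (@msum _ _ _ _ _ (fun j x => Dsum b j * theta j x)) //; last first.
  by move=> j; apply: cont_scale.
rewrite (@msum _ _ _ _ _ (fun j x => Dsum b j * theta j x)) //; last first.
  by move=> j; apply: cont_scale.
under eq_bigr do rewrite mZ //.
under [X in _ <= X + 1]eq_bigr do rewrite mZ //.
rewrite sizeb mulr_suml => h.
rewrite /d; under eq_bigr do rewrite mulrBr.
rewrite sumrB lerBlDl.
have e1 : \sum_(0 <= i < k) E k i * (u k (theta i) / mass (u k)) =
    \sum_(0 <= i < k) Dsum b i * u k (theta i) / mass (u k).
  by apply: eq_bigr => i _; rewrite /b DsumE mulrA.
have e2 : \sum_(0 <= i < k) E k i * nu0 (theta i) =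
    \sum_(0 <= i < k) Dsum b i * nu0 (theta i).
  by apply: eq_bigr => i _; rewrite /b DsumE.
by rewrite e1 e2.
Qed.


Let rho := q * q.
Let rho0 : 0 <= rho. Proof. by rewrite mulr_ge0 // invr_ge0. Qed.
Let rho2 : 2 * rho <= 1.
Proof. by rewrite /rho mulrA mulfV // mul1r invf_le1 // ler1n. Qed.
Let q0 : 0 <= q. Proof. exact: half_ge0. Qed.
Let q1 : q <= 1. Proof. exact: half_le1. Qed.

Let Ed_bd k j : `|E k j * d (u k) j| <= k%:R * rho ^+ j.
Proof.
by rewrite normrM /rho exprMn mulrA; apply: ler_pM => //.
Qed.

Let Ed_bd2 k j : (k <= j)%N -> `|E k j * d (u k) j| <= q ^+ j.
Proof.
move=> kj; rewrite normrM -[leRHS]mul1r; apply: ler_pM => //.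
apply: le_trans (E_bd k j) _; apply: le_trans (nat_pow_half k).
by apply: ler_wpM2l => //; apply: ler_wiXn2l.
Qed.

Let cross J k : \sum_(0 <= j < J) E k j * d (u k) j <= 3 + 2 * k%:R * rho ^+ J.
Proof.
have h := step k.
have kr : 0 <= 2 * k%:R * rho ^+ J.
  by apply: mulr_ge0; [apply: mulr_ge0 => //; exact: ler0n|exact: exprn_ge0].
have [Jk|kJ] := leqP J k.
  move: h; rewrite (big_cat_nat (n := J)) //= => h.
  have t : `|\sum_(J <= j < k) E k j * d (u k) j| <= 2 * k%:R * rho ^+ J.
    apply: le_trans; first exact: ler_norm_sum.
    apply: le_trans; first by apply: ler_sum => i _; exact: Ed_bd.
    rewrite -mulr_sumr.
    have -> : 2 * k%:R * rho ^+ J = k%:R * (2 * rho ^+ J) by ring.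
    apply: ler_wpM2l; first exact: ler0n.
    exact: geo_le.
  move: t; rewrite ler_norml => /andP[t1 t2]; lra.
rewrite (big_cat_nat (n := k)) //=; last exact: ltnW.
have t : `|\sum_(k <= j < J) E k j * d (u k) j| <= 2.
  apply: le_trans; first exact: ler_norm_sum.
  apply: le_trans (_ : \sum_(k <= j < J) q ^+ j <= _).
    rewrite big_nat_cond [leRHS]big_nat_cond; apply: ler_sum => i /andP[/andP[ki _] _].
    exact: Ed_bd2.
  apply: le_trans; first by apply: geo_le => //; rewrite mulfV.
  by rewrite -[leRHS]mulr1; apply: ler_wpM2l => //; apply: exprn_ile1.
move: t; rewrite ler_norml => /andP[t1 t2]; lra.
Qed.

Let V J k := \sum_(0 <= j < J) E k j ^+ 2.

Let E_rec k j : E k.+1 j = E k j + d (u k) j.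
Proof. by rewrite /E big_nat_recr. Qed.

Let V_rec J k : V J k.+1 <= V J k + 8 + 4 * k%:R * rho ^+ J.
Proof.
rewrite /V; under eq_bigr do rewrite E_rec sqrrD.
rewrite big_split big_split /= sumrMnl.
have c := cross J k.
have s2 : \sum_(0 <= j < J) d (u k) j ^+ 2 <= 2.
  apply: le_trans (_ : \sum_(0 <= j < J) rho ^+ j <= _).
    apply: ler_sum => j _; have := d_bd k j; rewrite ler_norml => /andP[a1 a2].
    have t0 : 0 <= q ^+ j by exact: exprn_ge0.
    rewrite /rho exprMn; nra.
  by apply: le_trans (geo_le 0 J rho0 rho2) _; rewrite expr0 mulr1.
rewrite mulr2n; lra.
Qed.

Let V_bd J k : V J k <= 8 * k%:R + 2 * rho ^+ J * k%:R ^+ 2.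
Proof.
elim: k => [|k IH].
  have -> : V J 0 = 0.
    by rewrite /V big1 // => j _; rewrite /E big_geq // expr0n.
  by rewrite mulr0 add0r expr0n /= mulr0.
apply: le_trans (V_rec J k) _.
have P0 : 0 <= rho ^+ J by exact: exprn_ge0.
have eK : (k.+1%:R : R) = k%:R + 1 by rewrite -addn1 natrD.
rewrite eK; set K := k%:R; set P := rho ^+ J in P0 *.
move: IH; rewrite -/K -/P => IH.
have -> : 8 * (K + 1) + 2 * P * (K + 1) ^+ 2 =
  (8 * K + 2 * P * K ^+ 2) + 8 + 4 * K * P + 2 * P by ring.
lra.
Qed.

Let E_sq k j : (0 < k)%N -> E k j ^+ 2 <= 10 * k%:R.
Proof.
move=> k0; set J := (k + j).+1.
have h1 : E k j ^+ 2 <= V J k.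
  apply: (sum_term_le (F := fun j => E k j ^+ 2)); first by rewrite ltnS leq_addl.
  by move=> i; exact: sqr_ge0.
have h2 := V_bd J k.
have r1 : rho ^+ J <= q ^+ k.
  rewrite /rho exprMn; apply: le_trans (_ : q ^+ J * 1 <= _).
    by apply: ler_wpM2l; [exact: exprn_ge0|exact: exprn_ile1].
  by rewrite mulr1; apply: ler_wiXn2l => //; apply: ltnW; rewrite /J ltnS leq_addr.
have r2 := nat_pow_half (R := R) k.
set K := k%:R in h2 r2 *.
have K0 : 0 <= K by exact: ler0n.
have h3 : 2 * rho ^+ J * K ^+ 2 <= 2 * K.
  apply: le_trans (_ : 2 * q ^+ k * K ^+ 2 <= _).
    by apply: ler_wpM2r; [exact: sqr_ge0|apply: ler_wpM2l].
  have -> : 2 * q ^+ k * K ^+ 2 = 2 * K * (K * q ^+ k) by ring.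
  by rewrite -[leRHS]mulr1; apply: ler_wpM2l => //; apply: mulr_ge0.
lra.
Qed.

Lemma useq_cvg j :
  (fun k => k%:R^-1 * \sum_(i < k) (u i (theta j) / mass (u i))) @ \oo -->
  nu0 (theta j).
Proof.
apply/cvgrPdist_le => e e0.
exists (Num.Def.trunc (10 / e ^+ 2)).+1 => // k /= Nk.
have k0 : (0 < k)%N by apply: leq_trans Nk.
set K := k%:R.
have K0 : 0 < K by rewrite ltr0n.
have eE : k%:R^-1 * \sum_(i < k) (u i (theta j) / mass (u i)) =
    nu0 (theta j) + E k j / K.
  rewrite /E /d sumrB sumr_const_nat subn0 big_mkord -[nu0 _ *+ k]mulr_natl -/K.
  field; exact: (lt0r_neq0 K0).
rewrite eE; have -> : nu0 (theta j) - (nu0 (theta j) + E k j / K) = - (E k j / K).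
  by ring.
rewrite normrN; apply: sq_norm_le; first exact: ltW.
have h := E_sq j k0.
have hK : 10 / e ^+ 2 < K.
  apply: lt_le_trans (truncnS_gt _) _; rewrite ler_nat; exact: Nk.
have hK' : 10 < e ^+ 2 * K.
  by move: hK; rewrite ltr_pdivrMr ?exprn_gt0 // mulrC.
rewrite expr_div_n ler_pdivrMr ?exprn_gt0 //.
apply: le_trans h _.
have -> : e ^+ 2 * K ^+ 2 = (e ^+ 2 * K) * K by ring.
by apply: ler_wpM2r; [exact: ltW|exact: ltW].
Qed.

Lemma exists_seq : exists u : nat -> (X -> R) -> R, (forall k, Y (u k)) /\
  forall j, (fun k => k%:R^-1 * \sum_(i < k) (u i (theta j) / mass (u i))) @ \oo -->
  nu0 (theta j).
Proof. by exists useq; split; [exact: useqY|exact: useq_cvg]. Qed.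
End Rec.

Section Comb.
Context {R : realType} {X : topologicalType}.

Lemma cvg_seq_sum (I : Type) (s : seq I) (F : I -> nat -> R) (a : I -> R) :
  (forall i, F i @ \oo --> a i) ->
  (fun k => \sum_(i <- s) F i k) @ \oo --> \sum_(i <- s) a i.
Proof.
move=> h; elim: s => [|i s IH].
  rewrite big_nil; under eq_fun do rewrite big_nil; exact: cvg_cst.
rewrite big_cons; under eq_fun do rewrite big_cons; exact: cvgD.
Qed.

Variable u : nat -> (X -> R) -> R.
Hypothesis umeas : forall k, is_measure (u k).
Hypothesis upos : forall k, 0 < mass (u k).

Let A k := fun g : X -> R => k%:R^-1 * \sum_(i < k) (u i g / mass (u i)).

Let Ameas k : is_measure (A k).
Proof.
split.
- move=> f g cf cg; rewrite /A; under eq_bigr do rewrite mD // mulrDl.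
  by rewrite big_split mulrDr.
- move=> a f cf; rewrite /A; under eq_bigr do rewrite mZ // -mulrA.
  by rewrite -mulr_sumr mulrCA.
- move=> f cf f0; rewrite /A; apply: mulr_ge0; first by rewrite invr_ge0.
  apply: sumr_ge0 => i _; apply: divr_ge0; first exact: mge0.
  exact/ltW.
Qed.

Let Amass k : (0 < k)%N -> mass (A k) = 1.
Proof.
move=> k0; rewrite /mass /A.
under eq_bigr do rewrite (mulfV (lt0r_neq0 (upos _))).
rewrite sumr_const card_ord -[_ *+ k]mulr_natl mulr1 mulVf //.
by rewrite pnatr_eq0 -lt0n.
Qed.

Lemma cesaro_all (nu0 : (X -> R) -> R) (theta : nat -> X -> R) :
  is_measure nu0 -> mass nu0 = 1 ->
  (forall j, continuous (theta j)) ->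
  (forall f, continuous f -> forall e, 0 < e -> exists l : seq (R * nat),
     forall x, `|f x - \sum_(p <- l) p.1 * theta p.2 x| <= e) ->
  (forall j, (fun k => A k (theta j)) @ \oo --> nu0 (theta j)) ->
  forall f, continuous f -> (fun k => A k f) @ \oo --> nu0 f.
Proof.
move=> nm n1 ct dense hj f cf.
apply/cvgrPdist_le => e e0.
have e3 : 0 < e / 3 by rewrite divr_gt0.
have [l hl] := dense f cf _ e3.
set g := fun x => \sum_(p <- l) p.1 * theta p.2 x.
have cg : continuous g.
  by apply: (cont_sum (F := fun p x => p.1 * theta p.2 x)) => p; apply: cont_scale.
have hg : (fun k => A k g) @ \oo --> nu0 g.
  have eA k : A k g = \sum_(p <- l) p.1 * A k (theta p.2).
    rewrite /g (@msum _ _ _ _ _ (fun p x => p.1 * theta p.2 x)) //; last first.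
      by move=> p; apply: cont_scale.
    by apply: eq_bigr => p _; rewrite mZ.
  have eN : nu0 g = \sum_(p <- l) p.1 * nu0 (theta p.2).
    rewrite /g (@msum _ _ _ _ _ (fun p x => p.1 * theta p.2 x)) //; last first.
      by move=> p; apply: cont_scale.
    by apply: eq_bigr => p _; rewrite mZ.
  under eq_fun do rewrite eA; rewrite eN.
  apply: (cvg_seq_sum (F := fun p k => p.1 * A k (theta p.2))) => p.
  by apply: cvgM; [exact: cvg_cst|exact: hj].
have := (cvgrPdist_le _ _).1 hg (e / 3) e3; case=> N _ HN.
exists N.+1 => // k /= Nk.
have k0 : (0 < k)%N by apply: leq_trans Nk.
have h2 : `|nu0 g - A k g| <= e / 3 by apply: HN => /=; exact: ltnW.
have h1 : `|nu0 f - nu0 g| <= e / 3 * mass nu0 by exact: mabs.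
have h3 : `|A k f - A k g| <= e / 3 * mass (A k) by exact: mabs.
rewrite n1 mulr1 in h1; rewrite Amass // mulr1 in h3.
have -> : nu0 f - A k f = (nu0 f - nu0 g) + (nu0 g - A k g) - (A k f - A k g) by ring.
apply: le_trans; first exact: ler_normB.
apply: le_trans; first by apply: lerD; [exact: ler_normD|exact: lexx].
have -> : e = e / 3 + e / 3 + e / 3 by field.
by apply: lerD => //; apply: lerD.
Qed.
End Comb.

Section Dir14.
Context {R : realType} {X : topologicalType}.

Lemma dir14 (Y : set (wstar R X))
  (Ymeas : forall mu, Y mu -> is_measure mu)
  (Ypos : forall mu, Y mu -> 0 < mass mu)
  (Yne : Y !=set0)
  (mu0 : (X -> R) -> R) (mu0meas : is_measure mu0) (mu0pos : 0 < mass mu0)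
  (theta : nat -> X -> R) (ctheta : forall j, continuous (theta j))
  (theta_bd : forall j x, 0 <= theta j x <= (2^-1)^+j)
  (dense : forall f, continuous f -> forall e, 0 < e -> exists l : seq (R * nat),
     forall x, `|f x - \sum_(p <- l) p.1 * theta p.2 x| <= e) :
  (forall f : X -> R, continuous f -> mu0 f < 0 ->
       exists2 mu, Y mu & mu f <= 0) ->
  (exists2 u : nat -> (X -> R) -> R, (forall k, Y (u k)) &
       forall f : X -> R, continuous f ->
         (fun k : nat => (k%:R)^-1 * \sum_(i < k) (u i f / mass (u i)))
           @ \oo --> mu0 f / mass mu0).
Proof.
move=> hi.
pose nu0 := fun g : X -> R => mu0 g / mass mu0.
have m0 : mass mu0 != 0 by rewrite gt_eqF.
have nmeas : is_measure nu0.
  split.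
  - by move=> f g cf cg; rewrite /nu0 mD // mulrDl.
  - by move=> a f cf; rewrite /nu0 mZ // mulrA.
  - by move=> f cf f0; rewrite /nu0; apply: divr_ge0; [exact: mge0|exact: ltW].
have n1 : mass nu0 = 1 by rewrite /nu0 /mass mulfV.
have hyp : forall f, continuous f ->
    exists2 mu, Y mu & mu f / mass mu <= nu0 f + 1.
  move=> f cf; set c := nu0 f + 1.
  have cg : continuous (fun x => f x - c) by apply: cont_add => //; exact/cont_opp/cst_cont.
  have neg : mu0 (fun x => f x - c) < 0.
    rewrite mB // ?mcst //; last exact: cst_cont.
    by rewrite /c /nu0 mulrDl mulfVK // mul1r opprD addrA subrr sub0r oppr_lt0.
  have [mu Ymu hmu] := hi _ cg neg.
  exists mu => //; have mm := Ymeas _ Ymu.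
  move: hmu; rewrite mB // ?mcst //; last exact: cst_cont.
  by rewrite subr_le0 ler_pdivrMr // Ypos.
have [u [Yu hu]] := exists_seq Ymeas Ypos Yne nmeas n1 ctheta theta_bd hyp.
exists u => // f cf.
have := @cesaro_all R X u (fun k => Ymeas _ (Yu k)) (fun k => Ypos _ (Yu k))
  nu0 theta nmeas n1 ctheta dense hu f cf.
by [].
Qed.
End Dir14.


Lemma cover_compact_np (X : topologicalType) (A : set X) :
  compact A -> cover_compact A.
Proof.
have [[x0 _]|nX] := pselect (exists x : X, True).
  pose Xp : ptopologicalType := HB.pack X (isPointed.Build X x0).
  have e := @compact_cover Xp.
  move=> cA; have : @compact Xp A by exact: cA.
  by rewrite e; exact.
move=> _ I D f _ _; exists finmap.fset0 => [i|x Ax].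
  by rewrite finmap.in_fset0.
by exfalso; apply: nX; exists x.
Qed.
Section Dense.
Context {R : realType} {X : topologicalType}.
Hypothesis hX : hausdorff_space X.
Hypothesis cX : compact [set: X].
Hypothesis sX : @second_countable X.

Let basis_enum : exists b : nat -> set X, (forall n, open (b n)) /\
  (forall x U, nbhs x U -> exists n, b n x /\ b n `<=` U).
Proof.
case: sX => B cB [Bop Bnb].
have [B0|sj] := pfcard_geP cB.
  exists (fun _ => set0); split => [n|x U xU]; first exact: open0.
  have [V [BV _] _] := Bnb x U xU.
  by rewrite B0 in BV.
have [f fE] := (surjfunPex).1 sj.
exists f; split.
  by move=> n; apply: Bop; rewrite fE; exists n.
move=> x U xU; have [V [BV Vx] VU] := Bnb x U xU.
by move: BV; rewrite fE => -[n _ fnV]; exists n; rewrite fnV.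
Qed.

Section WithB.
Variable b : nat -> set X.
Hypothesis bop : forall n, open (b n).
Hypothesis bnb : forall x U, nbhs x U -> exists n, b n x /\ b n `<=` U.

Let nX : normal_space X := compact_normal hX cX.

Let regular x U : open U -> U x -> exists n, b n x /\ closure (b n) `<=` U.
Proof.
move=> oU Ux.
have cl1 : closed [set x] by exact: accessible_closed_set1 (hausdorff_accessible hX) x.
have clU : closed (~` U) by exact: open_closedC.
have disj : [set x] `&` ~` U = set0.
  by rewrite -subset0 => y [/= -> nU]; exact: nU Ux.
have [V [W [oV oW xV UW VW]]] := (@normal_openP R X).1 nX _ _ cl1 clU disj.
have nV : nbhs x V by apply: open_nbhs_nbhs; split => //; exact: xV.
have [n [bx bV]] := bnb nV.
exists n; split => // y /(closureS bV) cVy.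
have VnW : V `<=` ~` W.
  by move=> z Vz Wz; have : (V `&` W) z by []; rewrite VW.
have cW : closure (~` W) = ~` W by rewrite -(closure_id (~` W)).1 //; exact: open_closedC.
have nWy : ~ W y by move: (closureS VnW cVy); rewrite cW.
by apply: contrapT => nUy; apply: nWy; exact: UW.
Qed.

Let h (p : nat * nat) : X -> R := @Urysohn X R (~` b p.2) (closure (b p.1)).
Let valid (p : nat * nat) := closure (b p.1) `<=` b p.2.

Let sep p : valid p -> uniform_separator (~` b p.2) (closure (b p.1)).
Proof.
move=> vp; apply: (@normal_separatorP R X).1 => //.
- exact/open_closedC/bop.
- exact: closed_closure.
by rewrite -subset0 => y [nby cy]; exact: nby (vp y cy).
Qed.

Let hc p : continuous (h p). Proof. exact: Urysohn_continuous. Qed.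

Let h01 p x : 0 <= h p x <= 1.
Proof.
have : h p x \in `[0, 1] by apply: (@Urysohn_range X R); exists x.
by rewrite in_itv.
Qed.

Let h_out p x : valid p -> ~ b p.2 x -> h p x = 0.
Proof. by move=> vp nb; apply: (@Urysohn_sub0 X R _ _ (sep vp)); exists x. Qed.

Let h_in p x : valid p -> b p.1 x -> h p x = 1.
Proof.
move=> vp bx; apply: (@Urysohn_sub1 X R _ _ (sep vp)); exists x => //.
exact: subset_closure.
Qed.

Let S (s : seq (nat * nat)) x := \sum_(p <- s) h p x.
Let phi s p x := h p x / Num.max 1 (S s x).

Let M_ge1 s x : 1 <= Num.max 1 (S s x). Proof. by rewrite le_max lexx. Qed.

Let phi_cont s p : continuous (phi s p).
Proof.
move=> x; apply: cvgM; first exact: hc.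
apply: cvgV.
  by apply: lt0r_neq0; apply: lt_le_trans (M_ge1 s x).
apply: (@continuous_max R X (fun _ => 1) (fun y => S s y) x).
  exact: cvg_cst.
exact: (cont_sum (F := h)).
Qed.

Let phi01 s p x : 0 <= phi s p x <= 1.
Proof.
have /andP[a1 a2] := h01 p x; have M1 := M_ge1 s x.
have M0 : 0 < Num.max 1 (S s x) by apply: lt_le_trans M1.
apply/andP; split; first exact: divr_ge0 (ltW M0).
by rewrite ler_pdivrMr // mul1r; apply: le_trans a2 M1.
Qed.

Let theta n x := (2^-1 : R) ^+ n *
  (match @unpickle (seq (nat * nat) * (nat * nat))%type n with
   | Some sp => phi sp.1 sp.2 x | None => 0 end).

Let theta_cont n : continuous (theta n).
Proof.
apply: cont_scale; case: unpickle => [sp|]; first exact: phi_cont.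
exact: cst_cont.
Qed.

Let theta_bd n x : 0 <= theta n x <= (2^-1) ^+ n.
Proof.
have q0 : 0 <= (2^-1 : R) ^+ n by apply: exprn_ge0; exact: half_ge0.
rewrite /theta; case: unpickle => [sp|]; last by rewrite mulr0 lexx q0.
have /andP[a1 a2] := phi01 sp.1 sp.2 x.
apply/andP; split; first exact: mulr_ge0.
by rewrite -[leRHS]mulr1; apply: ler_wpM2l.
Qed.

Let dense f : continuous f -> forall e, 0 < e -> exists l : seq (R * nat),
  forall x, `|f x - \sum_(p <- l) p.1 * theta p.2 x| <= e.
Proof.
move=> cf e e0.
pose D := [set p : nat * nat | valid p /\
  exists c : R, forall y, b p.2 y -> `|c - f y| < e].
pose F := fun p : nat * nat => b p.1.
have : finite_subset_cover D F [set: X].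
  apply: (cover_compact_np cX).
    by move=> p _; exact: bop.
  move=> x _.
  have nU : nbhs x [set y | `|f x - f y| < e].
    have hb := cf x _ (nbhsx_ballx (f x) e e0).
    by apply: (@filterS _ (nbhs x) _ (f @^-1` ball (f x) e)).
  have [c [bcx bcU]] := bnb nU.
  have [a [bax bac]] := regular (bop c) bcx.
  by exists (a, c) => //; split => //; exists (f x) => y /bcU.
case=> D' D'D cov.
pose s := finmap.enum_fset D'.
have sD p : p \in s -> D p by move=> ps; have := D'D p ps; rewrite inE.
have cex p : exists c : R, D p -> forall y, b p.2 y -> `|c - f y| < e.
  by have [[_ [c hc0]]|nD] := pselect (D p); [exists c | exists 0].
pose cp p := proj1_sig (cid (cex p)).
have cpP p : D p -> forall y, b p.2 y -> `|cp p - f y| < e.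
  by rewrite /cp; case: cid.
exists [seq (cp p * 2 ^+ pickle (s, p), pickle (s, p)) | p <- s].
move=> x; rewrite big_map /=.
have tE p : cp p * 2 ^+ pickle (s, p) * theta (pickle (s, p)) x = cp p * phi s p x.
  rewrite /theta pickleK /= exprVn mulrA mulrK //.
  by rewrite unitfE expf_neq0.
under eq_bigr do rewrite tE.
have [p pD' xbp] := cov x I.
have ps : p \in s by [].
have S1 : 1 <= S s x.
  rewrite /S (big_rem p) //= h_in //; last by case: (sD p ps).
  rewrite lerDl; apply: sumr_ge0 => i _; by have /andP[] := h01 i x.
rewrite /phi max_r //.
set Sx := S s x.
have Sx0 : 0 < Sx by apply: lt_le_trans S1.
have fE : f x = \sum_(p <- s) f x * (h p x / Sx).
  by rewrite -mulr_sumr -mulr_suml mulfV ?mulr1 // gt_eqF.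
rewrite {1}fE -sumrB.
under eq_bigr do rewrite -mulrBl.
apply: le_trans; first exact: ler_norm_sum.
apply: le_trans (_ : \sum_(p <- s) e * (h p x / Sx) <= _).
  rewrite [leLHS]big_seq [leRHS]big_seq; apply: ler_sum => i iS; rewrite normrM.
  have hx0 : 0 <= h i x / Sx by apply: divr_ge0 (ltW Sx0); have /andP[] := h01 i x.
  rewrite (ger0_norm hx0).
  case: (pselect (b i.2 x)) => bx.
    apply: ler_wpM2r; first exact: hx0.
    by rewrite distrC; apply: ltW; apply: cpP => //; exact: sD iS.
  by rewrite h_out ?mul0r ?mulr0 //; case: (sD i iS).
by rewrite -mulr_sumr -mulr_suml mulfV ?mulr1 // gt_eqF.
Qed.

Lemma dense_family : exists theta : nat -> X -> R,
  [/\ forall j, continuous (theta j),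
      forall j x, 0 <= theta j x <= (2^-1) ^+ j &
      forall f, continuous f -> forall e, 0 < e -> exists l : seq (R * nat),
        forall x, `|f x - \sum_(p <- l) p.1 * theta p.2 x| <= e].
Proof. by exists theta; split; [exact: theta_cont|exact: theta_bd|exact: dense]. Qed.

End WithB.

Lemma density : exists theta : nat -> X -> R,
  [/\ forall j, continuous (theta j),
      forall j x, 0 <= theta j x <= (2^-1) ^+ j &
      forall f, continuous f -> forall e, 0 < e -> exists l : seq (R * nat),
        forall x, `|f x - \sum_(p <- l) p.1 * theta p.2 x| <= e].
Proof.
have [b [bop bnb]] := basis_enum.
exact: (dense_family bop bnb).
Qed.
End Dense.

Unset Implicit Arguments. Set Strict Implicit. Set Printing Implicit Defensive.

Theorem theoremB1 (R : realType) (X : topologicalType)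
  (hX : hausdorff_space X) (cX : compact [set: X]) (sX : @second_countable X)
  (Y : set (wstar R X))
  (Ymeas : forall mu, Y mu -> is_measure mu)
  (Ypos : forall mu, Y mu -> 0 < mass mu)
  (Yne : Y !=set0) (Ycpt : compact Y)
  (mu0 : (X -> R) -> R) (mu0meas : is_measure mu0) (mu0pos : 0 < mass mu0) :
  [<->
    (* (i) *)
    (forall f : X -> R, continuous f -> mu0 f < 0 ->
       exists2 mu, Y mu & mu f <= 0);
    (* (ii) *)
    (forall f : X -> R, continuous f -> mu0 f = 0 ->
       exists2 mu, Y mu & mu f <= 0);
    (* (iii) *)
    (@closure (wstar R X) (conv_hull (pos_cone Y)) mu0);
    (* (iv) *)
    (exists2 u : nat -> (X -> R) -> R, (forall k, Y (u k)) &
       forall f : X -> R, continuous f ->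
         (fun k : nat => (k%:R)^-1 * \sum_(i < k) (u i f / mass (u i)))
           @ \oo --> mu0 f / mass mu0)].
Proof.
have [theta [ct tb dn]] := @density R X hX cX sX.
have d21 := dir21 Ymeas Ypos mu0meas mu0pos.
have d32 := dir32 Ymeas Ypos Ycpt mu0meas mu0pos.
have d43 := dir43 Ymeas Ypos mu0meas mu0pos.
have d14 := dir14 Ymeas Ypos Yne mu0meas mu0pos ct tb dn.
tfae => h.
- exact/d32/d43/d14.
- exact/d43/d14/d21.
- exact/d14/d21/d32.
- exact/d21/d32/d43.
Qed.
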